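(* Let $f(t)=\sum_{k=0}^{D}c_k\binom{D}{k}t^k(1-t)^{D-k}$ for $t\in[0,1]$. Then: (1) $f'(t)\ge0$ for all $t\in[0,1]$. (2) If the Increasing Conditional Divergence (ICD) condition holds, i.e. $\Delta_i(S)\le\Delta_i(T)$ for all $i\in[D]$ and all $S\subseteq T\subseteq[D]\setminus\{i\}$, then $f''(t)\ge0$ for all $t\in[0,1]$. (3) If moreover the second-order ICD condition holds, i.e. $\Delta_i(S\cup\{j\})-\Delta_i(S)\le\Delta_i(S\cup\{j,\ell\})-\Delta_i(S\cup\{\ell\})$ for all distinct $i,j,\ell\in[D]$ and all $S\subseteq[D]\setminus\{i,j,\ell\}$, then $f^{(3)}(t)\ge0$ for all $t\in[0,1]$.
   Context: Let $\mathcal X$ be a finite alphabet, $D\ge1$, $[D]=\{1,\dots,D\}$, and $p_0,\pi_0$ probability distributions on $\mathcal X^D$ with $\pi_0$ of full support. For $U\subseteq[D]$ let $F(U)=\mathrm{KL}\big(p_0^{(U)}\|\pi_0^{(U)}\big)$, where $p_0^{(U)}$ is the marginal of $p_0$ on the coordinates in $U$, and $F(\emptyset)=0$. For $i\notin U$ let $\Delta_i(U)=F(U\cup\{i\})-F(U)$. For $0\le k\le D$ let $c_k=\binom{D}{k}^{-1}\sum_{|U|=k}F(U)$ (the average of $F$ over subsets of size $k$). *)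

(* Defs.v *)
From HB Require Import structures.
From mathcomp Require Import all_boot all_order all_algebra.
From mathcomp Require Import reals exp.
Set Implicit Arguments. Unset Strict Implicit. Unset Printing Implicit Defensive.
Import Order.TTheory GRing.Theory Num.Theory.
Local Open Scope ring_scope.

Section Defs.
Variables (R : realType) (X : finType) (D : nat).

Definition config := {ffun 'I_D -> X}.

Definition subconfig (U : {set 'I_D}) := {ffun {i : 'I_D | i \in U} -> X}.

Definition marginal (p : config -> R) (U : {set 'I_D}) (y : subconfig U) : R :=
  \sum_(x : config | [forall i, x (val i) == y i]) p x.

(* KL divergence between finite distributions (with 0 log 0 = 0 since
   the term is multiplied by the mass) *)
Definition KLdiv (T : finType) (p q : T -> R) : R :=
  \sum_(y : T) p y * ln (p y / q y).

Definition Fdiv (p0 pi0 : config -> R) (U : {set 'I_D}) : R :=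
  KLdiv (marginal p0 (U:=U)) (marginal pi0 (U:=U)).

Definition Delta (p0 pi0 : config -> R) (i : 'I_D) (U : {set 'I_D}) : R :=
  Fdiv p0 pi0 (i |: U) - Fdiv p0 pi0 U.

Definition cavg (p0 pi0 : config -> R) (k : nat) : R :=
  (\sum_(U : {set 'I_D} | #|U| == k) Fdiv p0 pi0 U) / ('C(D, k))%:R.

Definition fpoly (p0 pi0 : config -> R) : {poly R} :=
  \sum_(k < D.+1) (cavg p0 pi0 k * ('C(D, k))%:R) *: ('X ^+ k * (1 - 'X) ^+ (D - k)).

Definition is_distr (p : config -> R) : Prop :=
  (forall x, 0 <= p x) /\ \sum_x p x = 1.

Definition ICD (p0 pi0 : config -> R) : Prop :=
  forall (i : 'I_D) (S T : {set 'I_D}), S \subset T -> i \notin T ->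
    Delta p0 pi0 i S <= Delta p0 pi0 i T.

Definition ICD2 (p0 pi0 : config -> R) : Prop :=
  forall (i j l : 'I_D) (S : {set 'I_D}),
    i != j -> i != l -> j != l -> i \notin S -> j \notin S -> l \notin S ->
    Delta p0 pi0 i (j |: S) - Delta p0 pi0 i S <=
    Delta p0 pi0 i (j |: (l |: S)) - Delta p0 pi0 i (l |: S).

End Defs.

(* Main.v *)
Require Import Defs.
From HB Require Import structures.
From mathcomp Require Import all_boot all_order all_algebra.
From mathcomp Require Import reals exp.
From mathcomp Require Import ring lra zify.
Import Order.TTheory GRing.Theory Num.Theory.
Local Open Scope ring_scope.

Section LogSum.
Variable R : realType.

Lemma ln_le_sub1 (w : R) : 0 < w -> ln w <= w - 1.
Proof.
move=> w0; have := @le_ln1Dx R (w - 1).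
rewrite addrCA subrr addr0; apply; lra.
Qed.

Lemma logsum (I : finType) (P : pred I) (p q : I -> R) :
  (forall i, 0 <= p i) -> (forall i, 0 <= q i) -> (forall i, q i = 0 -> p i = 0) ->
  (\sum_(i | P i) p i) * ln ((\sum_(i | P i) p i) / (\sum_(i | P i) q i))
  <= \sum_(i | P i) p i * ln (p i / q i).
Proof.
move=> p0 q0 qp.
set Ps := \sum_(i | P i) p i; set Qs := \sum_(i | P i) q i.
have Ps0 : 0 <= Ps by apply: sumr_ge0.
have Qs0 : 0 <= Qs by apply: sumr_ge0.
have [Pz|Pp] := eqVneq Ps 0.
  rewrite Pz mul0r.
  have: forall i, P i -> p i = 0.
    move=> i Pi; move: Pz; rewrite /Ps => /eqP; rewrite psumr_eq0 //.
    by move/allP => /(_ i (mem_index_enum i)); rewrite Pi /= => /eqP.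
  move=> h; rewrite big1 // => i Pi; by rewrite h // mul0r.
have Pgt : 0 < Ps by rewrite lt_def Pp Ps0.
have [Qz|Qp] := eqVneq Qs 0.
  exfalso; move/negP: Pp; apply; apply/eqP.
  rewrite /Ps big1 // => i Pi; apply: qp.
  move: Qz; rewrite /Qs => /eqP; rewrite psumr_eq0 //.
  by move/allP => /(_ i (mem_index_enum i)); rewrite Pi /= => /eqP.
have Qgt : 0 < Qs by rewrite lt_def Qp Qs0.
have key : forall i, p i * ln (Ps / Qs) + p i - q i * (Ps / Qs) <= p i * ln (p i / q i).
  move=> i; have [pz|pp] := eqVneq (p i) 0.
    rewrite pz !mul0r add0r sub0r oppr_le0; apply: mulr_ge0 => //.
    by apply: divr_ge0; apply/ltW.
  have pgt : 0 < p i by rewrite lt_def pp p0.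
  have qgt : 0 < q i.
    rewrite lt_def q0 andbT; apply/eqP => /qp; exact/eqP.
  set w := (p i / q i) / (Ps / Qs).
  have wgt : 0 < w by rewrite /w !divr_gt0.
  have e1 : ln (p i / q i) = ln w + ln (Ps / Qs).
    rewrite -lnM ?posrE ?divr_gt0 //; congr ln; rewrite /w divfK //.
    by rewrite gt_eqF // divr_gt0.
  have e2 : - ln w <= w^-1 - 1 by rewrite -lnV ?posrE // ln_le_sub1 // invr_gt0.
  rewrite e1 mulrDr.
  have h1 : p i * (1 - w^-1) <= p i * ln w.
    by rewrite ler_pM2l //; lra.
  have e3 : p i * (1 - w^-1) = p i - q i * (Ps / Qs).
    rewrite /w; field; rewrite ?gt_eqF //.
  lra.
apply: le_trans (ler_sum _ (fun i _ => key i)).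
rewrite !big_split /= -!mulr_suml -/Ps.
rewrite sumrN -mulr_suml -/Qs.
have -> : Qs * (Ps / Qs) = Ps by rewrite mulrC divfK // gt_eqF.
by rewrite addrK.
Qed.
End LogSum.


Section KL.
Variable R : realType.

Lemma KL_push (A B : finType) (r : A -> B) (p q : A -> R) :
  (forall i, 0 <= p i) -> (forall i, 0 <= q i) -> (forall i, q i = 0 -> p i = 0) ->
  KLdiv (fun b => \sum_(a | r a == b) p a) (fun b => \sum_(a | r a == b) q a)
  <= KLdiv p q.
Proof.
move=> p0 q0 qp; rewrite /KLdiv (partition_big r (fun _ => true)) //=.
apply: ler_sum => b _; exact: logsum.
Qed.

Variables (X : finType) (D : nat).

Definition restr {V W : {set 'I_D}} (sVW : V \subset W) (z : subconfig X W) : subconfig X V :=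
  [ffun k : {i : 'I_D | i \in V} => z (exist _ (val k) (subsetP sVW _ (valP k)))].

Definition restrW {W : {set 'I_D}} (x : config X D) : subconfig X W :=
  [ffun k : {i : 'I_D | i \in W} => x (val k)].

Lemma marg_push (p : config X D -> R) (V W : {set 'I_D}) (sVW : V \subset W) y :
  marginal p y = \sum_(z | restr sVW z == y) marginal p z.
Proof.
rewrite /marginal (partition_big (@restrW W) (fun z => restr sVW z == y)).
  apply: eq_bigr => z /eqP <-; apply: eq_bigl => x.
  apply/andP/forallP.
    by case=> _ /eqP <- i; rewrite /restrW ffunE.
  move=> h; have ez : restrW (W:=W) x = z by apply/ffunP => i; rewrite ffunE; apply/eqP.
  split=> //; last by rewrite ez.
  apply/forallP => i; rewrite -ez /restr /restrW !ffunE //.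
move=> x /forallP h; apply/eqP/ffunP => i; rewrite /restr /restrW !ffunE /=.
by apply/eqP; apply: h.
Qed.
End KL.
Arguments restr {X D V W}.
Arguments restrW {X D W}.
Arguments marg_push {R X D p V W}.

Section Fmono.
Variables (R : realType) (X : finType) (D : nat) (p0 pi0 : config X D -> R).
Hypothesis p0ge : forall x, 0 <= p0 x.
Hypothesis pi0gt : forall x, 0 < pi0 x.

Lemma Fdiv_mono (V W : {set 'I_D}) : V \subset W -> Fdiv p0 pi0 V <= Fdiv p0 pi0 W.
Proof.
move=> sVW; rewrite /Fdiv.
have -> : KLdiv (marginal p0 (U:=V)) (marginal pi0 (U:=V)) =
  KLdiv (fun b => \sum_(a | restr sVW a == b) marginal p0 a)
        (fun b => \sum_(a | restr sVW a == b) marginal pi0 a).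
  by rewrite /KLdiv; apply: eq_bigr => y _; rewrite !(marg_push sVW).
apply: KL_push.
- by move=> z; apply: sumr_ge0.
- by move=> z; apply: sumr_ge0 => x _; apply/ltW.
move=> z /eqP; rewrite /marginal psumr_eq0; last by move=> x _; apply/ltW.
move/allP => h; apply: big1 => x Px.
have := h x (mem_index_enum x); rewrite Px /= => /eqP e.
by have := pi0gt x; rewrite e ltxx.
Qed.

Lemma Delta_ge0 i U : 0 <= Delta p0 pi0 i U.
Proof. by rewrite /Delta subr_ge0; apply: Fdiv_mono; apply: subsetUr. Qed.
End Fmono.
Lemma swap_add (T : finType) (V : nmodType) (K : {set T} -> T -> V) :
  \sum_(U : {set T}) \sum_(i in U) K U i = \sum_(U : {set T}) \sum_(i in ~: U) K (i |: U) i.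
Proof.
rewrite (exchange_big_dep predT) //= [RHS](exchange_big_dep predT) //=.
apply: eq_bigr => i _.
rewrite (reindex_onto (fun U => i |: U) (fun U => U :\ i)) /=.
  apply: eq_bigl => U; rewrite setU11 /= in_setC.
  apply/eqP/idP.
    move=> e; apply/negP => iU; have e1 : i |: U = U by apply/setUidPr; rewrite sub1set.
    move: e; rewrite e1 => e.
    by have := setD11 i U; rewrite e iU.
  by move=> iU; rewrite setU1K.
by move=> U iU; rewrite setD1K.
Qed.

Section Poly.
Variables (R : realType) (D : nat).

Definition wp (m : nat) (U : {set 'I_D}) : {poly R} := 'X^#|U| * (1 - 'X) ^+ (D - m - #|U|).
Definition Pp m (H : {set 'I_D} -> R) : {poly R} := \sum_U H U *: wp m U.
Definition dH m (H : {set 'I_D} -> R) U : R :=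
  \sum_(i in ~: U) H (i |: U) - (D - m - #|U|)%:R * H U.

Lemma Pp_deriv m H : (Pp m H)^`() = Pp m.+1 (dH m H).
Proof.
rewrite /Pp /dH linear_sum /=.
have dw : forall U, (wp m U)^`() =
   ('X^(#|U|.-1) * (1 - 'X) ^+ (D - m - #|U|)) *+ #|U| - wp m.+1 U *+ (D - m - #|U|).
  move=> U; rewrite /wp derivM derivXn deriv_exp derivB derivC derivX.
  have -> : (D - m.+1 - #|U| = (D - m - #|U|).-1)%N by lia.
  by rewrite sub0r mulN1r mulrnAl mulrnAr mulrN mulNrn.
under eq_bigr do rewrite linearZ /= dw scalerBr.
under [RHS]eq_bigr do rewrite scalerBl.
rewrite !sumrB; congr (_ - _); last first.
  by apply: eq_bigr => U _; rewrite -scalerA scaler_nat scalerMnr.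
transitivity (\sum_(U : {set 'I_D}) \sum_(i in U) H U *: ('X^(#|U|.-1) * (1 - 'X) ^+ (D - m - #|U|))).
  by apply: eq_bigr => U _; rewrite sumr_const scalerMnr.
rewrite swap_add; apply: eq_bigr => U _; rewrite scaler_suml; apply: eq_bigr => i.
rewrite in_setC => iU; rewrite cardsU1 iU /wp /=; congr (_ *: (_ * _)); congr (_ ^+ _); lia.
Qed.

Lemma Pp_ge0 m H t : (forall U, 0 <= H U) -> 0 <= t <= 1 -> 0 <= (Pp m H).[t].
Proof.
move=> H0 /andP [t0 t1]; rewrite /Pp horner_sum; apply: sumr_ge0 => U _.
rewrite hornerZ /wp hornerM hornerXn horner_exp hornerD hornerN hornerX hornerC.
apply: mulr_ge0 => //; apply: mulr_ge0; apply: exprn_ge0 => //; lra.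
Qed.
End Poly.
Arguments wp {R D}. Arguments Pp {R D}. Arguments dH {R D}.

Lemma swap2 (T : finType) (V : nmodType) (U : {set T}) (K : T -> T -> V) :
  \sum_(j in ~: U) \sum_(i in ~: (j |: U)) K i j =
  \sum_(i in ~: U) \sum_(j in ~: (i |: U)) K i j.
Proof.
rewrite (exchange_big_dep (fun i => i \in ~: U)) /=; last first.
  by move=> j i; rewrite !in_setC !in_setU1 negb_or => _ /andP [].
apply: eq_bigr => i; rewrite in_setC => iU; apply: eq_bigl => j.
rewrite !in_setC !in_setU1 (negbTE iU) orbF eq_sym.
by case: (j == i); case: (j \in U).
Qed.

Lemma card_notin1 (D : nat) (U : {set 'I_D}) i : i \notin U -> #|~: (i |: U)| = (D - 1 - #|U|)%N.
Proof. move=> iU; have := cardsC (i |: U); rewrite cardsU1 iU card_ord; lia. Qed.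

Lemma card_notin0 (D : nat) (U : {set 'I_D}) : #|~: U| = (D - #|U|)%N.
Proof. have := cardsC U; rewrite card_ord; lia. Qed.

Lemma card_notin2 (D : nat) (U : {set 'I_D}) i j : i \notin U -> j \notin U -> j != i ->
  #|~: (j |: (i |: U))| = (D - 2 - #|U|)%N.
Proof.
move=> iU jU ji; have := cardsC (j |: (i |: U)).
rewrite cardsU1 cardsU1 iU in_setU1 (negbTE ji) jU card_ord /=; lia.
Qed.

Section Main.
Variables (R : realType) (X : finType) (D : nat) (p0 pi0 : config X D -> R).

Let F := Fdiv p0 pi0.
Let H1 := dH 0 F.
Let H2 := dH 1 H1.
Let H3 := dH 2 H2.
Let Dl := Delta p0 pi0.

Lemma H1E U : H1 U = \sum_(i in ~: U) Dl i U.
Proof.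
rewrite /H1 /dH /Dl /Delta sumrB sumr_const card_notin0 subn0 mulr_natl //.
Qed.

Lemma H2E U : H2 U = \sum_(i in ~: U) \sum_(j in ~: (i |: U)) (Dl i (j |: U) - Dl i U).
Proof.
rewrite /H2 /dH.
under eq_bigr do rewrite H1E.
rewrite swap2 H1E mulr_sumr -sumrB; apply: eq_bigr => i; rewrite in_setC => iU.
by rewrite [RHS]sumrB sumr_const card_notin1 // mulr_natl.
Qed.

Lemma H3E U : H3 U = \sum_(i in ~: U) \sum_(j in ~: (i |: U)) \sum_(l in ~: (j |: (i |: U)))
   ((Dl i (j |: (l |: U)) - Dl i (l |: U)) - (Dl i (j |: U) - Dl i U)).
Proof.
rewrite /H3 /dH.
under eq_bigr do rewrite H2E.
rewrite swap2 H2E mulr_sumr -sumrB; apply: eq_bigr => i; rewrite in_setC => iU.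
rewrite mulr_sumr.
have e : forall j, ~: (i |: (j |: U)) = ~: (j |: (i |: U)) by move=> j; rewrite setUCA.
under eq_bigr => j _ do rewrite e.
rewrite (@swap2 _ _ (i |: U) (fun j0 j => Dl i (j0 |: (j |: U)) - Dl i (j |: U))) -sumrB.
apply: eq_bigr => j; rewrite in_setC in_setU1 negb_or => /andP [ji jU].
by rewrite [RHS]sumrB sumr_const card_notin2 // mulr_natl.
Qed.
Lemma fpolyE : fpoly p0 pi0 = Pp 0 F.
Proof.
rewrite /fpoly /Pp /wp.
rewrite (partition_big (fun U : {set 'I_D} => inord #|U| : 'I_D.+1) predT) //=.
apply: eq_bigr => k _.
have Ck : ('C(D, k))%:R != 0 :> R by rewrite pnatr_eq0 -lt0n bin_gt0 -ltnS.
rewrite /cavg divfK // scaler_suml; apply: eq_big => U.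
  have := max_card U; rewrite card_ord => cU.
  by rewrite -[in RHS](inj_eq val_inj) /= inordK.
by move=> /eqP <-; rewrite subn0.
Qed.

Lemma H1_ge0 (p0ge : forall x, 0 <= p0 x) (pi0gt : forall x, 0 < pi0 x) U : 0 <= H1 U.
Proof. rewrite H1E; apply: sumr_ge0 => i _; exact: Delta_ge0. Qed.

Lemma H2_ge0 : ICD p0 pi0 -> forall U, 0 <= H2 U.
Proof.
move=> icd U; rewrite H2E; apply: sumr_ge0 => i; rewrite in_setC => iU.
apply: sumr_ge0 => j; rewrite in_setC in_setU1 negb_or => /andP [ji jU].
rewrite subr_ge0; apply: icd; first exact: subsetUr.
by rewrite in_setU1 negb_or eq_sym ji.
Qed.

Lemma H3_ge0 : ICD2 p0 pi0 -> forall U, 0 <= H3 U.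
Proof.
move=> icd U; rewrite H3E; apply: sumr_ge0 => i; rewrite in_setC => iU.
apply: sumr_ge0 => j; rewrite in_setC in_setU1 negb_or => /andP [ji jU].
apply: sumr_ge0 => l; rewrite in_setC !in_setU1 !negb_or => /and3P [lj li lU].
rewrite subr_ge0; apply: icd => //; by rewrite eq_sym.
Qed.

Lemma derivs :
  [/\ (fpoly p0 pi0)^`() = Pp 1 H1, (fpoly p0 pi0)^`(2) = Pp 2 H2 &
      (fpoly p0 pi0)^`(3) = Pp 3 H3].
Proof.
have e1 : (fpoly p0 pi0)^`() = Pp 1 H1 by rewrite fpolyE Pp_deriv.
have e2 : (fpoly p0 pi0)^`(2) = Pp 2 H2 by rewrite derivSn derivn1 e1 Pp_deriv.
split=> //; by rewrite derivSn derivSn derivn1 e1 Pp_deriv Pp_deriv.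
Qed.
End Main.

Theorem mainTheorem6 (R : realType) (X : finType) (D : nat)
  (p0 pi0 : config X D -> R) :
  (0 < D)%N ->
  is_distr p0 -> is_distr pi0 -> (forall x, 0 < pi0 x) ->
  [/\ (forall t : R, 0 <= t <= 1 -> 0 <= (fpoly p0 pi0)^`().[t]),
      (ICD p0 pi0 -> forall t : R, 0 <= t <= 1 -> 0 <= (fpoly p0 pi0)^`(2).[t]) &
      (ICD p0 pi0 -> ICD2 p0 pi0 ->
         forall t : R, 0 <= t <= 1 -> 0 <= (fpoly p0 pi0)^`(3).[t])].
Proof.
move=> _ [p0ge _] _ pi0gt.
have [e1 e2 e3] := @derivs R X D p0 pi0.
split.
- move=> t ht; rewrite e1; apply: Pp_ge0 => // U; exact: H1_ge0.
- move=> icd t ht; rewrite e2; apply: Pp_ge0 => // U; exact: H2_ge0.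
- move=> icd icd2 t ht; rewrite e3; apply: Pp_ge0 => // U; exact: H3_ge0.
Qed.
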